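(* In the setting of the context, let $i\in\{1,\dots,n\}$ and let $(x_1,y_1)$, $(x_2,y_2)$ be two distinct elements of $\mathfrak{X}_i$ with $0<y_1\le y_2$. Then $$\frac{y_2}{y_1}\ge \frac{1}{2Y_S+7/3}\max\big(1,|\beta_i(x_1,y_1)-m(x_1,y_1)|\big).$$
   Context: Setting: $n\ge3$; $F(x,y)=\sum_{i=0}^s a_ix^{n_i}y^{n-n_i}\in\mathbb{Z}[x,y]$ of degree $n$, irreducible over $\mathbb{Q}$, all $a_i\neq0$, $0=n_0<\dots<n_s=n$, discriminant $D$. $R=n^{800\log^2n}$; $h$ a positive integer and $\kappa>1$ an integer with $h\le |D|^{\frac{1}{2(n-1)(2+1/\kappa)}}/\big((3R)^{n/2}(ns)^{2s+n}\big)$; $Y_S=e^6s(ns)^{2s/n}h^{1/(\kappa n)}$. Write $F(x,y)=a\prod_{i=1}^n(x-\alpha_iy)$ ($\alpha_i$ the roots of $F(x,1)$) and $L_i(x,y)=x-\alpha_iy$. A ''solution'' is a pair $(x,y)\in\mathbb{Z}^2$ with $\gcd(x,y)=1$ and $1\le|F(x,y)|\le h$, with $(x,y)$ and $(-x,-y)$ identified. Assume there is a solution with $0\le y\le Y_S$, and fix one such, $(x_0,y_0)$, with $y_0\ge0$ minimal. Index the roots so that $|L_1(x_0,y_0)|=\min_i|L_i(x_0,y_0)|$. There is at most one solution $(x^*,y^* )$ with $0<y^*\le Y_S$ and $|L_1(x^*,y^* )|<1/(2Y_S)$; let $\mathbf{A}=\{(x_0,y_0)\}$ together with $(x^*,y^*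 )$ if it exists. For a primitive $(x,y)$ choose integers $x',y'$ with $x'y-xy'=1$ and set $\beta_j(x,y)=-L_j(x',y')/L_j(x,y)$ for $j=1,\dots,n$ (so that $F(ux+wx',uy+wy')=F(x,y)\prod_j(u-\beta_j(x,y)w)$), and let $m(x,y)$ be an integer with $|\mathrm{Re}\,\beta_1(x,y)-m(x,y)|\le 1/2$. For $1\le i\le n$, $\mathfrak{X}_i$ is the set of solutions $(x,y)\notin\mathbf{A}$ with $1\le y\le Y_S$ and $|L_i(x,y)|\le\frac{1}{2y}$. *)

(* Defs.v *)
From mathcomp Require Import all_boot all_order all_algebra.
From mathcomp Require Import complex.
From mathcomp Require Import all_classical all_reals all_analysis.
Set Implicit Arguments.
Unset Strict Implicit.
Unset Printing Implicit Defensive.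
Import Order.TTheory GRing.Theory Num.Theory.
Local Open Scope ring_scope.

(* The binary form F(x,y) = sum_k f_k x^k y^(n-k) of degree n, encoded by its
   coefficient polynomial f = F(x,1) in Z[x] (size f = n+1). *)
Definition Fval (f : {poly int}) (n : nat) (x y : int) : int :=
  \sum_(k < n.+1) f`_k * x ^+ k * y ^+ (n - k).

Definition nterms_s (f : {poly int}) : nat := (count (fun c : int => c != 0) f).-1.

Definition is_solution (f : {poly int}) (n h : nat) (x y : int) : Prop :=
  coprimez x y /\ (1 <= `|Fval f n x y|)%R /\ (`|Fval f n x y| <= h%:Z)%R.

Section Cplx.
Variable R : realType.

Definition cmod (z : R[i]) : R :=
  Num.sqrt (complex.Re z ^+ 2 + complex.Im z ^+ 2).

(* L_j(x,y) = x - alpha_j y, roots indexed 1..n *)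
Definition Lin (alpha : nat -> R[i]) (j : nat) (x y : int) : R[i] :=
  x%:~R - alpha j * y%:~R.

(* beta_j(x,y) = - L_j(x',y') / L_j(x,y), for given x', y' with x'y - xy' = 1 *)
Definition beta (alpha : nat -> R[i]) (j : nat) (x y x' y' : int) : R[i] :=
  - Lin alpha j x' y' / Lin alpha j x y.

Definition disc (a : int) (n : nat) (alpha : nat -> R[i]) : R[i] :=
  a%:~R ^+ (2 * n - 2) *
  \prod_(1 <= i < n.+1) \prod_(i.+1 <= j < n.+1) (alpha i - alpha j) ^+ 2.

Definition Rconst (n : nat) : R := (n%:R : R) `^ (800 * (ln (n%:R : R)) ^+ 2).

Definition YS (n s h kappa : nat) : R :=
  expR 6 * s%:R * (((n * s)%:R : R) `^ (2 * s%:R / n%:R))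
    * ((h%:R : R) `^ (1 / (kappa%:R * n%:R))).

(* membership in the set A = {(x0,y0)} u {(x_star,y_star)}, with (x,y) ~ (-x,-y) *)
Definition inA (f : {poly int}) (n h : nat) (alpha : nat -> R[i]) (Y : R)
    (x0 y0 x y : int) : Prop :=
  ((x, y) = (x0, y0)) \/ ((x, y) = (- x0, - y0)) \/
  (is_solution f n h x y /\ (0 < y)%R /\ (y%:~R <= Y)%R /\
   (cmod (Lin alpha 1 x y) < 1 / (2 * Y))%R).

Definition inX (f : {poly int}) (n h : nat) (alpha : nat -> R[i]) (Y : R)
    (x0 y0 : int) (i : nat) (x y : int) : Prop :=
  is_solution f n h x y /\ ~ inA f n h alpha Y x0 y0 x y /\
  (1 <= y)%R /\ (y%:~R <= Y)%R /\
  (cmod (Lin alpha i x y) <= 1 / (2 * y%:~R))%R.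

End Cplx.

(* Main.v *)
Require Import Defs.
From mathcomp Require Import all_boot all_order all_algebra.
From mathcomp Require Import complex.
From mathcomp Require Import all_classical all_reals all_analysis.
Import Order.TTheory GRing.Theory Num.Theory.
Local Open Scope ring_scope.
From mathcomp Require Import ring lra zify.

Section H.
Variable R : realType.
Local Open Scope complex_scope.
Implicit Types z w : R[i].

Lemma cmodE z : `|z| = (cmod z)%:C.
Proof. by rewrite normc_def. Qed.

Lemma cmod_ge0 z : 0 <= cmod z.
Proof. exact: sqrtr_ge0. Qed.

Lemma cmodD z w : cmod (z + w) <= cmod z + cmod w.
Proof. by rewrite -lecR rmorphD /= -!cmodE ler_normD. Qed.

Lemma cmodB z w : cmod (z - w) <= cmod z + cmod w.
Proof. by rewrite -lecR rmorphD /= -!cmodE ler_normB. Qed.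

Lemma cmodM z w : cmod (z * w) = cmod z * cmod w.
Proof. by apply: complexI; rewrite rmorphM /= -!cmodE normrM. Qed.

Lemma cmodV z : cmod (z^-1) = (cmod z)^-1.
Proof. by apply: complexI; rewrite fmorphV /= -!cmodE normfV. Qed.

Lemma cmodN z : cmod (- z) = cmod z.
Proof. by apply: complexI; rewrite -!cmodE normrN. Qed.

Lemma cmodR (r : R) : cmod r%:C = `|r|.
Proof. by rewrite /cmod /= expr0n /= addr0 sqrtr_sqr. Qed.

Lemma cmod_Re z : `|complex.Re z| <= cmod z.
Proof. by rewrite -sqrtr_sqr ler_wsqrtr // lerDl sqr_ge0. Qed.

Lemma intC (k : int) : (k%:~R : R[i]) = (k%:~R : R)%:C.
Proof. by rewrite rmorph_int. Qed.

Lemma cmod_int (k : int) : cmod (k%:~R) = (`|k|%:~R : R).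
Proof. by rewrite intC cmodR -intr_norm. Qed.

Lemma cmod_eq0 z : (cmod z == 0) = (z == 0).
Proof. rewrite -[z == 0]normr_eq0 cmodE. by apply/eqP/eqP => [->//|[]]. Qed.

Lemma cmod_sq z : cmod z ^+ 2 = complex.Re z ^+ 2 + complex.Im z ^+ 2.
Proof. by rewrite /cmod sqr_sqrtr // addr_ge0 // sqr_ge0. Qed.

Lemma LinRe (alpha : nat -> R[i]) j x y :
  complex.Re (Lin alpha j x y) = x%:~R - complex.Re (alpha j) * y%:~R.
Proof. rewrite /Lin !intC; case: (alpha j) => a b /=. by rewrite !mulr0 subr0. Qed.

Lemma LinIm (alpha : nat -> R[i]) j x y :
  complex.Im (Lin alpha j x y) = - (complex.Im (alpha j) * y%:~R).
Proof. rewrite /Lin !intC; case: (alpha j) => a b /=. by rewrite mulr0 !add0r. Qed.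

Lemma no_rat_root (f : {poly int}) n (alpha : nat -> R[i]) j (q : rat) :
  (3 <= n)%N -> size f = n.+1 ->
  irreducible_poly (map_poly (intr : int -> rat) f) ->
  map_poly (fun c : int => (c%:~R : R[i])) f
    = (f`_n)%:~R *: \prod_(1 <= k < n.+1) ('X - (alpha k)%:P) ->
  (1 <= j <= n)%N -> alpha j = ratr q -> False.
Proof.
move=> hn hs hirr hfact hj hq.
set p := map_poly (intr : int -> rat) f.
have hC : map_poly (fun c : int => (c%:~R : R[i])) f = map_poly ratr p.
  rewrite /p -map_poly_comp; apply: eq_map_poly => c /=; by rewrite ratr_int.
have root0 : (map_poly ratr p).[alpha j] = 0 :> R[i].
  rewrite -hC hfact hornerZ horner_prod; apply/eqP; rewrite mulf_eq0; apply/orP; right.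
  rewrite prodf_seq_eq0; apply/hasP; exists j.
    by rewrite mem_index_iota; case/andP: hj => -> /=; rewrite ltnS.
  by rewrite hornerXsubC subrr eqxx.
have rootp : root p q.
  by apply/eqP; apply: (fmorph_inj (ratr : rat -> R[i])); rewrite -horner_map /= -hq root0 rmorph0.
have hd : ('X - q%:P) %| p by rewrite dvdp_XsubCl.
have := hirr.2 _ _ hd; rewrite size_XsubC => /(_ isT) /eqp_size.
rewrite size_XsubC /p size_map_inj_poly ?hs //; last exact: intr_inj.
by move=> [] h; move: hn; rewrite -h.
Qed.

Lemma ReB z w : complex.Re (z - w) = complex.Re z - complex.Re w.
Proof. by case: z; case: w. Qed.
Lemma ReN z : complex.Re (- z) = - complex.Re z.
Proof. by case: z. Qed.

Lemma beta_eq (alpha : nat -> R[i]) j x1 y1 x' y' :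
  x' * y1 - x1 * y' = 1 -> y1 != 0 -> Lin alpha j x1 y1 != 0 ->
  beta alpha j x1 y1 x' y' = - (y1%:~R * Lin alpha j x1 y1)^-1 - y'%:~R / y1%:~R.
Proof.
move=> hdet hy hL.
have hy' : (y1%:~R : R[i]) != 0 by rewrite intr_eq0.
have hx' : (x'%:~R : R[i]) = (1 + x1%:~R * y'%:~R) / y1%:~R.
  have : ((x' * y1 - x1 * y')%:~R : R[i]) = 1 by rewrite hdet.
  rewrite intrB !intrM => /eqP; rewrite subr_eq addrC => /eqP h.
  by apply: (mulIf hy'); rewrite h divfK.
move: hL; rewrite /beta /Lin hx' => hL.
field; rewrite hy' hL //.
Qed.
End H.

Theorem lemma4p3 (R : realType) (n : nat) (f : {poly int}) (alpha : nat -> R[i])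
    (h kappa : nat) (x0 y0 : int) (i : nat) (x1 y1 x2 y2 : int) :
  (3 <= n)%N ->
  size f = n.+1 ->
  f`_0 != 0 ->
  irreducible_poly (map_poly (intr : int -> rat) f) ->
  map_poly (fun c : int => (c%:~R : R[i])) f
    = (f`_n)%:~R *: \prod_(1 <= j < n.+1) ('X - (alpha j)%:P) ->
  (0 < h)%N -> (1 < kappa)%N ->
  let s := nterms_s f in
  let D := disc (f`_n) n alpha in
  let Y := YS R n s h kappa in
  (h%:R : R) <= cmod D `^ (1 / (2 * (n%:R - 1) * (2 + 1 / kappa%:R)))
                / ((3 * Rconst R n) `^ (n%:R / 2) * ((n * s)%:R) ^+ (2 * s + n)) ->
  is_solution f n h x0 y0 -> 0 <= y0 -> y0%:~R <= Y ->
  (forall x y : int, is_solution f n h x y -> 0 <= y -> y0 <= y) ->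
  (forall j : nat, (1 <= j <= n)%N ->
     cmod (Lin alpha 1 x0 y0) <= cmod (Lin alpha j x0 y0)) ->
  (1 <= i <= n)%N ->
  inX f n h alpha Y x0 y0 i x1 y1 ->
  inX f n h alpha Y x0 y0 i x2 y2 ->
  (x1, y1) <> (x2, y2) -> 0 < y1 -> y1 <= y2 ->
  forall x' y' m : int,
    x' * y1 - x1 * y' = 1 ->
    `|complex.Re (beta alpha 1 x1 y1 x' y') - m%:~R| <= 1 / 2 ->
    Num.max 1 (cmod (beta alpha i x1 y1 x' y' - m%:~R)) / (2 * Y + 7 / 3)
      <= y2%:~R / y1%:~R.
Proof.
move=> hn hsize hf0 hirr hfact hh hk s D Y hhD sol0 y0ge Y0 hmin hmin1 hi X1 X2 hneq
  y1pos y12 x' y' m hdet hm.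
clearbody Y s D.
case: X1 => sol1 [nA1 [y1ge1 [y1Y hL1]]].
case: X2 => sol2 [nA2 [y2ge1 [y2Y hL2]]].
set L := Lin alpha i x1 y1 in hL1 *.
set L2 := Lin alpha i x2 y2 in hL2 *.
set K := Lin alpha 1 x1 y1.
have hK : 1 / (2 * Y) <= cmod K.
  rewrite leNgt; apply/negP => hlt; apply: nA1; right; right; by split.
have ry1 : (1 : R) <= y1%:~R by rewrite ler1z.
have ry12 : (y1%:~R : R) <= y2%:~R by rewrite ler_int.
have Yge1 : (1 : R) <= Y by lra.
have hA0 := cmod_ge0 _ L; have hB0 := cmod_ge0 _ L2; have hC0 := cmod_ge0 _ K.
have hB : cmod L2 * (2 * y2%:~R) <= 1 by rewrite -ler_pdivlMr ?mul1r // ; lra.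
have hA : cmod L * (2 * y1%:~R) <= 1 by rewrite -ler_pdivlMr ?mul1r // ; lra.
have hC : 1 <= cmod K * (2 * Y) by rewrite -ler_pdivrMr //; lra.
case: (ltgtP y1 y2) => [lt12 | gt12 | e12]; last first.
- subst y2.
  have hx : x1 != x2 by apply/eqP => ex; apply: hneq; rewrite ex.
  have hd : ((x2 - x1)%:~R : R[i]) = L2 - L by rewrite /L2 /L /Lin intrB; ring.
  have hd1 : (1 : R) <= `|(x2 - x1)%:~R : R|.
    by rewrite -intr_norm ler1z -gtz0_ge1 normr_gt0 subr_eq0 eq_sym.
  have hd2 : `|(x2 - x1)%:~R : R| <= cmod L2 + cmod L.
    by rewrite -intr_norm -cmod_int hd cmodB.
  have ey : (y1%:~R : R) = 1.
    have hh1 : 0 <= (cmod L2 + cmod L - 1) * (y1%:~R - 1) by apply: mulr_ge0; lra.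
    apply/eqP; rewrite eq_le ry1 andbT. move: hh1 hA hB hd1 hd2. generalize (cmod L) (cmod L2) (y1%:~R : R) (`|(x2 - x1)%:~R : R|). move=> *. lra.
  have hsL := cmod_sq _ L; have hsL2 := cmod_sq _ L2.
  rewrite /L /L2 !LinRe !LinIm ey !mulr1 in hsL hsL2.
  rewrite ey in hA hB.
  have hdd : ((x2 - x1)%:~R : R) ^+ 2 >= 1.
    by rewrite -real_normK ?num_real //; nra.
  rewrite intrB in hdd.
  set p := (x1%:~R : R) in hsL hdd; set q := (x2%:~R : R) in hsL2 hdd.
  set ra := complex.Re (alpha i) in hsL hsL2; set ia := complex.Im (alpha i) in hsL hsL2.
  have hA2 : cmod L ^+ 2 <= 1/4 by nra.
  have hB2 : cmod L2 ^+ 2 <= 1/4 by nra.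
  have hsq := sqr_ge0 (p - ra + (q - ra)).
  have I0 : ia = 0.
    have : ia ^+ 2 <= 0 by nra.
    by move=> h0; apply/eqP; rewrite -sqrf_eq0 eq_le h0 sqr_ge0.
  have pq : p - ra + (q - ra) = 0.
    have : (p - ra + (q - ra)) ^+ 2 <= 0 by nra.
    by move=> h0; apply/eqP; rewrite -sqrf_eq0 eq_le h0 sqr_ge0.
  exfalso.
  apply: (@no_rat_root R f n alpha i ((x1 + x2)%:~R / 2) hn hsize hirr hfact hi).
  have -> : (ratr ((x1 + x2)%:~R / 2) : R[i]) = ((ratr ((x1 + x2)%:~R / 2) : R)%:C)%C.
    by rewrite fmorph_rat.
  have -> : (ratr ((x1 + x2)%:~R / 2) : R) = (x1%:~R + x2%:~R) / 2.
    by rewrite fmorph_div rmorph_int intrD rmorph_nat.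
  move: I0 pq; rewrite /ra /ia /p /q.
  case: (alpha i) => ar ai /= -> pq.
  apply/eqP; rewrite eq_complex /= eqxx andbT; apply/eqP; lra.
- by move: y12; rewrite leNgt gt12.
have cop : coprimez y2 x2 by rewrite coprimez_sym; case: sol2.
have hw : x2 * y1 - x1 * y2 != 0.
  apply/eqP => /eqP; rewrite subr_eq0 => /eqP hw.
  have hdv : (y2 %| y1)%Z by rewrite -(Gauss_dvdzr y1 cop) hw dvdz_mull // dvdzz.
  have : (absz y2 <= absz y1)%N by apply: dvdn_leq => //; rewrite absz_gt0 gt_eqF.
  by rewrite -lez_nat !abszE (gtr0_norm y1pos) gtr0_norm ?(lt_trans y1pos lt12) // leNgt lt12.
have hwR : ((x2 * y1 - x1 * y2)%:~R : R[i]) = L2 * y1%:~R - L * y2%:~R.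
  by rewrite /L2 /L /Lin intrB !intrM; ring.
have hcy1 : cmod (y1%:~R : R[i]) = y1%:~R by rewrite cmod_int gtr0_norm.
have hcy2 : cmod (y2%:~R : R[i]) = y2%:~R by rewrite cmod_int gtr0_norm // (lt_trans y1pos).
have h1 : 1 <= cmod L2 * y1%:~R + cmod L * y2%:~R.
  have : (1:R) <= `|x2 * y1 - x1 * y2|%:~R by rewrite ler1z -gtz0_ge1 normr_gt0.
  move/le_trans; apply.
  by rewrite -cmod_int hwR -hcy1 -hcy2 -!cmodM; exact: cmodB.
have hAy : 1 <= cmod L * (2 * y2%:~R).
  have hh1 : 0 <= cmod L2 * (y2%:~R - y1%:~R) by apply: mulr_ge0; lra.
  nra.
have Apos : 0 < cmod L.
  rewrite lt_neqAle hA0 andbT; apply/eqP => h0; move: hAy; rewrite -h0 mul0r; lra.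
have Cpos : 0 < cmod K.
  rewrite lt_neqAle hC0 andbT; apply/eqP => h0; move: hC; rewrite -h0 mul0r; lra.
have hLnz : L != 0 by rewrite -(cmod_eq0 R) gt_eqF.
have hKnz : K != 0 by rewrite -(cmod_eq0 R) gt_eqF.
have hy0 : y1 != 0 by rewrite gt_eqF.
rewrite (@beta_eq R alpha i x1 y1 x' y' hdet hy0 hLnz).
rewrite (@beta_eq R alpha 1 x1 y1 x' y' hdet hy0 hKnz) in hm.
set c := (y'%:~R / y1%:~R : R).
have hc : (y'%:~R / y1%:~R : R[i]) = (c%:C)%C by rewrite /c fmorph_div /= !rmorph_int.
rewrite hc in hm *.
set u := (y1%:~R * Lin alpha 1 x1 y1)^-1 in hm.
rewrite ReB ReN /= in hm.
have hu : cmod u = (y1%:~R * cmod K)^-1 by rewrite /u cmodV cmodM hcy1.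
have hRu := cmod_Re _ u.
rewrite hu in hRu.
have hM : cmod (- (y1%:~R * L)^-1 - (c%:C)%C - m%:~R)
    <= (y1%:~R * cmod L)^-1 + (1/2 + (y1%:~R * cmod K)^-1).
  have -> : - (y1%:~R * L)^-1 - (c%:C)%C - m%:~R
      = - (y1%:~R * L)^-1 - ((c + m%:~R)%:C)%C by rewrite rmorphD opprD addrA rmorph_int.
  apply: le_trans (cmodB _ _ _) _.
  rewrite cmodN cmodV cmodM hcy1 cmodR lerD2l.
  move: hm hRu; rewrite !ler_norml => /andP[hm1 hm2] /andP[hr1 hr2].
  apply/andP; split; lra.
set M := cmod _ in hM *.
set Y1 := (y1%:~R : R) in ry1 ry12 hM hA hC hAy hcy1 *.
set Y2 := (y2%:~R : R) in ry12 hM hAy y2Y *.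
have y12' : Y1 + 1 <= Y2.
  have : y1 + 1 <= y2 by rewrite lezD1.
  by rewrite -(ler_int R) intrD.
have Y1pos : 0 < Y1 by lra.
have hiA : (Y1 * cmod L)^-1 <= 2 * (Y2 * Y1^-1).
  rewrite -div1r ler_pdivrMr ?mulr_gt0 //.
  have -> : 2 * (Y2 * Y1^-1) * (Y1 * cmod L) = cmod L * (2 * Y2) by field; rewrite gt_eqF.
  exact: hAy.
have hiC : (Y1 * cmod K)^-1 <= 2 * Y * Y1^-1.
  rewrite -div1r ler_pdivrMr ?mulr_gt0 //.
  have -> : 2 * Y * Y1^-1 * (Y1 * cmod K) = cmod K * (2 * Y) by field; rewrite gt_eqF.
  exact: hC.
have vpos : 0 < Y1^-1 by rewrite invr_gt0.
have hv1 : Y1 * Y1^-1 = 1 by rewrite mulfV // gt_eqF.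
have ht : 1 + Y1^-1 <= Y2 * Y1^-1.
  have : 0 <= (Y2 - Y1 - 1) * Y1^-1 by apply: mulr_ge0; lra.
  lra.
rewrite ler_pdivrMr; last by lra.
rewrite ge_max; apply/andP; split.
  have : 0 <= (Y2 * Y1^-1 - 1) * (2 * Y + 7/3) by apply: mulr_ge0; lra.
  lra.
have : 0 <= Y * (Y2 * Y1^-1 - 1 - Y1^-1) by apply: mulr_ge0; lra.
lra.
Qed.
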